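(* Let $A,B,A',B'$ be qubit systems, with Alice holding $AA'$ and Bob holding $BB'$. Define the Bell states $|\psi_{0,1}\rangle=\frac{1}{\sqrt2}(|00\rangle\pm|11\rangle)$, $|\psi_{2,3}\rangle=\frac{1}{\sqrt2}(|01\rangle\pm|10\rangle)$, and write $\psi_i=|\psi_i\rangle\langle\psi_i|$. Define $|\chi_\pm\rangle=\frac12\big(\sqrt{2\pm\sqrt2}\,|00\rangle\pm\sqrt{2\mp\sqrt2}\,|11\rangle\big)$ and $\chi_\pm=|\chi_\pm\rangle\langle\chi_\pm|$. Let $p\in[0,1]$, $\kappa\in[0,1]$, $q_0=q_1=p/2$, $q_2=q_3=(1-p)/2$, and $\rho^{(0)}=\frac12(|00\rangle\langle00|+\psi_2)$, $\rho^{(1)}=\frac12(|11\rangle\langle11|+\psi_3)$, $\rho^{(2)}=\chi_+$, $\rho^{(3)}=\chi_-$ (states on $A'B'$). Let $$\rho_H=(1-\kappa)\sum_{i=0}^3 q_i\,\psi_{i,AB}\otimes\rho^{(i)}_{A'B'}+\kappa\,\frac{I}{16}.$$ Then there exists a unitary of the form $U=\sum_{i,j\in\{0,1\}}|ij\rangle\langle ij|_{AB}\otimes U_{ij,A'B'}$ with each $U_{ij}$ unitary on $A'B'$, such that $$\mathrm{Tr}_{A'B'}\big[U\rho_H U^\dagger\big]=(1-\kappa)\big(p\,\psi_0+(1-p)\,\psi_2\big)+\kappa\,\frac{I}{4}.$$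
   Context: $\{|0\rangle,|1\rangle\}$ denotes the computational basis of each qubit; $|ij\rangle=|i\rangle_A|j\rangle_B$. $I$ denotes the identity operator on the relevant space ($I/16$ is the maximally mixed state on $ABA'B'$, $I/4$ on $AB$). *)

(* Defs.v *)
From HB Require Import structures.
From mathcomp Require Import all_boot all_order all_algebra all_field.
From mathcomp Require Import spectral.
Set Implicit Arguments. Unset Strict Implicit. Unset Printing Implicit Defensive.
Import Order.TTheory GRing.Theory Num.Theory.
Local Open Scope ring_scope.
Local Open Scope sesquilinear_scope.

(* The four-qubit system ABA'B' is
   ordered as (AB) (x) (A'B'), basis index 4*(2a+b) + (2a'+b') : 'I_16. *)

Definition ket2 (i j : nat) : 'cV[algC]_4 := delta_mx (inord (2*i + j)) 0.

Definition proj (v : 'cV[algC]_4) : 'M[algC]_4 := v *m v ^t*.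

Definition s2 : algC := sqrtC 2.

Definition psi0 : 'cV[algC]_4 := s2^-1 *: (ket2 0 0 + ket2 1 1).
Definition psi1 : 'cV[algC]_4 := s2^-1 *: (ket2 0 0 - ket2 1 1).
Definition psi2 : 'cV[algC]_4 := s2^-1 *: (ket2 0 1 + ket2 1 0).
Definition psi3 : 'cV[algC]_4 := s2^-1 *: (ket2 0 1 - ket2 1 0).

Definition psi (i : 'I_4) : 'cV[algC]_4 :=
  match val i with 0 => psi0 | 1 => psi1 | 2 => psi2 | _ => psi3 end.

Definition chip : 'cV[algC]_4 :=
  2^-1 *: (sqrtC (2 + s2) *: ket2 0 0 + sqrtC (2 - s2) *: ket2 1 1).
Definition chim : 'cV[algC]_4 :=
  2^-1 *: (sqrtC (2 - s2) *: ket2 0 0 - sqrtC (2 + s2) *: ket2 1 1).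

Definition rho (i : 'I_4) : 'M[algC]_4 :=
  match val i with
  | 0 => 2^-1 *: (proj (ket2 0 0) + proj psi2)
  | 1 => 2^-1 *: (proj (ket2 1 1) + proj psi3)
  | 2 => proj chip
  | _ => proj chim
  end.

Definition q (p : algC) (i : 'I_4) : algC :=
  if (val i < 2)%N then p / 2 else (1 - p) / 2.

Definition idx (x y : 'I_4) : 'I_16 := inord (4 * x + y).

Definition kron (A B : 'M[algC]_4) : 'M[algC]_16 :=
  \matrix_(r, c) \sum_(x < 4) \sum_(y < 4) \sum_(x' < 4) \sum_(y' < 4)
     (if (r == idx x y) && (c == idx x' y') then A x x' * B y y' else 0).

Definition ptrace2 (M : 'M[algC]_16) : 'M[algC]_4 :=
  \matrix_(x, x') \sum_(y < 4) M (idx x y) (idx x' y).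

Definition rhoH (p kappa : algC) : 'M[algC]_16 :=
  (1 - kappa) *: (\sum_(i < 4) q p i *: kron (proj (psi i)) (rho i))
  + kappa *: ((16%:R)^-1 *: 1%:M).

Definition controlled (Uf : 'I_4 -> 'M[algC]_4) : 'M[algC]_16 :=
  \sum_(x < 4) kron (delta_mx x x) (Uf x).

(* Main.v *)
Require Import Defs.
From mathcomp Require Import all_boot all_order all_algebra all_field.
From mathcomp Require Import spectral zify ring.
Import Order.TTheory GRing.Theory Num.Theory.
Local Open Scope ring_scope.
Local Open Scope sesquilinear_scope.

Lemma idxK (x y : 'I_4) : nat_of_ord (idx x y) = (4 * x + y)%N.
Proof. rewrite inordK //; have := ltn_ord x; have := ltn_ord y; lia. Qed.

Lemma idx_eq (x y a b : 'I_4) : (idx x y == idx a b) = (x == a) && (y == b).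
Proof.
rewrite -val_eqE /= !idxK.
have := ltn_ord x; have := ltn_ord y; have := ltn_ord a; have := ltn_ord b.
case: (x =P a) => [->|ne] /=; first by rewrite eqn_add2l.
move=> *; apply/eqP => h; apply: ne; apply: val_inj => /=; lia.
Qed.

Lemma sum16 (F : 'I_16 -> algC) :
  \sum_(k < 16) F k = \sum_(a < 4) \sum_(b < 4) F (idx a b).
Proof.
rewrite pair_big /= (reindex (fun p : 'I_4 * 'I_4 => idx p.1 p.2)) //.
exists (fun k : 'I_16 => (inord (k %/ 4) : 'I_4, inord (k %% 4) : 'I_4)).
  move=> [a b] _ /=; have := ltn_ord a; have := ltn_ord b.
  by move=> ? ?; congr pair; apply: val_inj; rewrite /= inordK idxK; lia.
move=> k _; apply: val_inj; rewrite /= idxK !inordK; have := ltn_ord k; lia.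
Qed.

Lemma sum_only (F : 'I_4 -> algC) x : (forall a, a != x -> F a = 0) ->
  \sum_a F a = F x.
Proof. by move=> H; rewrite (bigD1 x) //= big1 ?addr0. Qed.
Arguments sum_only {F}.

Lemma kronE A B (x y x' y' : 'I_4) :
  kron A B (idx x y) (idx x' y') = A x x' * B y y'.
Proof.
rewrite mxE (sum_only x) => [|a na]; last first.
  by rewrite big1 // => b _; rewrite big1 // => a' _; rewrite big1 // => b' _;
     rewrite !idx_eq [x == a]eq_sym (negbTE na).
rewrite (sum_only y) => [|b nb]; last first.
  by rewrite big1 // => a' _; rewrite big1 // => b' _;
     rewrite !idx_eq [y == b]eq_sym (negbTE nb) andbF.
rewrite (sum_only x') => [|a na]; last first.
  by rewrite big1 // => b' _; rewrite !idx_eq [x' == a]eq_sym (negbTE na) andbF.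
rewrite (sum_only y') => [|b nb]; last first.
  by rewrite !idx_eq [y' == b]eq_sym (negbTE nb) !andbF.
by rewrite !idx_eq !eqxx.
Qed.

Lemma controlledE Uf (x y a b : 'I_4) :
  controlled Uf (idx x y) (idx a b) = (x == a)%:R * Uf x y b.
Proof.
rewrite /controlled summxE (sum_only x) => [|z nz].
  by rewrite kronE mxE eqxx [a == x]eq_sym; case: (x == a); rewrite ?mul1r ?mul0r.
by rewrite kronE mxE [x == z]eq_sym (negbTE nz) mul0r.
Qed.

Lemma sum4_id (F : 'I_4 -> algC) x : \sum_a (x == a)%:R * F a = F x.
Proof.
rewrite (sum_only x) ?eqxx ?mul1r // => a na.
by rewrite eq_sym (negbTE na) mul0r.
Qed.

Definition blk (M : 'M[algC]_16) (x x' : 'I_4) : 'M[algC]_4 :=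
  \matrix_(b, b') M (idx x b) (idx x' b').

Lemma mulUE Uf (M : 'M[algC]_16) (x y : 'I_4) (c : 'I_16) :
  (controlled Uf *m M) (idx x y) c = \sum_b Uf x y b * M (idx x b) c.
Proof.
rewrite mxE sum16 (sum_only x) => [|a na].
  by apply: eq_bigr => b _; rewrite controlledE eqxx mul1r.
by rewrite big1 // => b _; rewrite controlledE eq_sym (negbTE na) !mul0r.
Qed.

Lemma ptraceE Uf M (x x' : 'I_4) :
  ptrace2 (controlled Uf *m M *m (controlled Uf)^t*) x x' =
  \tr (Uf x *m blk M x x' *m (Uf x')^t*).
Proof.
rewrite mxE /mxtrace; apply: eq_bigr => y _.
rewrite mxE sum16 (sum_only x') => [|a na]; last first.
  by rewrite big1 // => b _; rewrite !mxE controlledE [x' == a]eq_sym (negbTE na) mul0r rmorph0 mulr0.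
rewrite mxE; apply: eq_bigr => b _.
rewrite [in RHS]mxE mulUE !mxE controlledE eqxx mul1r; congr (_ * _).
by apply: eq_bigr => b' _; rewrite mxE.
Qed.

Lemma blk_rhoH p k (x x' : 'I_4) : blk (rhoH p k) x x' =
  (1 - k) *: (\sum_i (q p i * proj (psi i) x x') *: rho i)
  + (k * 16%:R^-1 * (x == x')%:R) *: 1%:M.
Proof.
apply/matrixP => b b'; rewrite /blk /rhoH; move: (kronE); move: kron => K KE.
rewrite !(mxE, summxE); congr (_ + _).
  by f_equal; apply: eq_bigr => i _; rewrite [LHS]mxE [RHS]mxE KE mulrA.
rewrite idx_eq; case: (x == x'); case: (b == b') => /=;
  by rewrite ?mulr1 ?mulr0.
Qed.

Lemma entryE Uf p k (x x' : 'I_4) :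
  ptrace2 (controlled Uf *m rhoH p k *m (controlled Uf)^t*) x x' =
  (1 - k) * \sum_i (q p i * proj (psi i) x x') * \tr (Uf x *m rho i *m (Uf x')^t*)
  + (k * 16%:R^-1 * (x == x')%:R) * \tr (Uf x *m (Uf x')^t*).
Proof.
rewrite ptraceE blk_rhoH mulmxDr mulmxDl mxtraceD -!scalemxAr -!scalemxAl !mxtraceZ.
rewrite mulmx1 mulmx_sumr mulmx_suml raddf_sum; congr (_ * _ + _).
by apply: eq_bigr => i _; rewrite -scalemxAr -scalemxAl; apply: mxtraceZ.
Qed.
Lemma s2_ge0 : 0 <= s2. Proof. by rewrite sqrtC_ge0 ler0n. Qed.
Lemma s2s2 : s2 * s2 = 2. Proof. by rewrite -expr2 sqrtCK. Qed.
Lemma s2_neq0 : s2 != 0. Proof. by rewrite sqrtC_eq0 pnatr_eq0. Qed.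
Lemma s2_conj : s2^* = s2. Proof. by apply: conj_Creal; apply: ger0_real; exact: s2_ge0. Qed.
Lemma s2_le2 : s2 <= 2.
Proof.
have -> : (2 : algC) = sqrtC 4.
  by apply/eqP; rewrite -(eqrXn2 (n:=2)) ?sqrtCK ?sqrtC_ge0 ?ler0n //; rewrite expr2 -natrM.
rewrite ler_sqrtC // ?qualifE /= ?ler0n // (ler_nat _ 2 4) //.
Qed.

Definition ca := sqrtC (2 + s2).
Definition cb := sqrtC (2 - s2).
Lemma ca_ge0 : 0 <= ca. Proof. by rewrite sqrtC_ge0 addr_ge0 ?ler0n ?s2_ge0. Qed.
Lemma cb_ge0 : 0 <= cb. Proof. by rewrite sqrtC_ge0 subr_ge0 s2_le2. Qed.
Lemma caa : ca * ca = 2 + s2. Proof. by rewrite -expr2 sqrtCK. Qed.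
Lemma cbb : cb * cb = 2 - s2. Proof. by rewrite -expr2 sqrtCK. Qed.
Lemma cab : ca * cb = s2.
Proof.
have h1 : 2 + s2 \is Num.nneg by rewrite qualifE /= addr_ge0 ?ler0n ?s2_ge0.
have h2 : 2 - s2 \is Num.nneg by rewrite qualifE /= subr_ge0 s2_le2.
rewrite /ca /cb -sqrtCM //.
have -> : (2 + s2) * (2 - s2) = 2.
  have := s2s2; move=> h; rewrite mulrDl !mulrBr h; ring.
by [].
Qed.
Lemma ca_conj : ca^* = ca. Proof. by apply: conj_Creal; apply: ger0_real; exact: ca_ge0. Qed.
Lemma cb_conj : cb^* = cb. Proof. by apply: conj_Creal; apply: ger0_real; exact: cb_ge0. Qed.

Ltac ord4 k := case: k => [[|[|[|[|//]]]] ?].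

Lemma ket2E i j (k : 'I_4) : (2 * i + j < 4)%N ->
  ket2 i j k 0 = (nat_of_ord k == (2 * i + j)%N)%:R.
Proof. by move=> h; rewrite mxE -val_eqE /= inordK // andbT. Qed.

Lemma eq_inord (k : 'I_4) n : (n < 4)%N -> (k == inord n) = (nat_of_ord k == n).
Proof. by move=> h; rewrite -val_eqE /= inordK. Qed.

Definition sg (i k : nat) : algC :=
  match i, k with
  | 0, 0 | 0, 3 | 1, 0 | 2, 1 | 2, 2 | 3, 1 => 1
  | 1, 3 | 3, 2 => -1
  | _, _ => 0 end.

Lemma sg_conj i k : (sg i k)^* = sg i k.
Proof.
by do 4?[case: i => [|i]]; do 4?[case: k => [|k]]; rewrite /= ?rmorph0 ?rmorph1 ?rmorphN1.
Qed.

Lemma psiE (i k : 'I_4) : psi i k 0 = s2^-1 * sg i k.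
Proof.
rewrite /psi /psi0 /psi1 /psi2 /psi3.
by ord4 i; rewrite /= !mxE !eq_inord //; ord4 k; rewrite /=; ring.
Qed.

Lemma projE (v : 'cV[algC]_4) k l : proj v k l = v k 0 * (v l 0)^*.
Proof. by rewrite /proj mxE big_ord1 !mxE. Qed.

Lemma projpsiE (i k l : 'I_4) : proj (psi i) k l = 2^-1 * (sg i k * sg i l).
Proof.
rewrite projE !psiE rmorphM /= sg_conj fmorphV /= s2_conj -s2s2 invfM; ring.
Qed.

Lemma projpsi2E (k l : 'I_4) : proj psi2 k l = 2^-1 * (sg 2 k * sg 2 l).
Proof. exact: (projpsiE (Ordinal (isT : (2 < 4)%N))). Qed.
Lemma projpsi3E (k l : 'I_4) : proj psi3 k l = 2^-1 * (sg 3 k * sg 3 l).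
Proof. exact: (projpsiE (Ordinal (isT : (3 < 4)%N))). Qed.
Lemma projpsi0E (k l : 'I_4) : proj psi0 k l = 2^-1 * (sg 0 k * sg 0 l).
Proof. exact: (projpsiE (Ordinal (isT : (0 < 4)%N))). Qed.

Lemma projketE i j (k l : 'I_4) : (2 * i + j < 4)%N ->
  proj (ket2 i j) k l = (nat_of_ord k == (2 * i + j)%N)%:R * (nat_of_ord l == (2 * i + j)%N)%:R.
Proof. by move=> h; rewrite projE !ket2E // rmorph_nat. Qed.

Definition cp (k : nat) : algC := match k with 0 => ca | 3 => cb | _ => 0 end.
Definition cm (k : nat) : algC := match k with 0 => cb | 3 => - ca | _ => 0 end.

Lemma chipE (k : 'I_4) : chip k 0 = 2^-1 * cp k.
Proof. by rewrite /chip !mxE !eq_inord //; ord4 k; rewrite /= /ca /cb; ring. Qed.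
Lemma chimE (k : 'I_4) : chim k 0 = 2^-1 * cm k.
Proof. by rewrite /chim !mxE !eq_inord //; ord4 k; rewrite /= /ca /cb; ring. Qed.

Definition rhot (i k l : nat) : algC :=
  match i with
  | 0 => match k, l with 0, 0 => 2^-1 | 1, 1 | 1, 2 | 2, 1 | 2, 2 => 4^-1 | _, _ => 0 end
  | 1 => match k, l with 3, 3 => 2^-1 | 1, 1 | 2, 2 => 4^-1 | 1, 2 | 2, 1 => - 4^-1 | _, _ => 0 end
  | 2 => match k, l with 0, 0 => (2 + s2) / 4 | 0, 3 | 3, 0 => s2 / 4 | 3, 3 => (2 - s2) / 4 | _, _ => 0 end
  | _ => match k, l with 0, 0 => (2 - s2) / 4 | 0, 3 | 3, 0 => - s2 / 4 | 3, 3 => (2 + s2) / 4 | _, _ => 0 end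
  end.

Lemma rhoE (i k l : 'I_4) : rho i k l = rhot i k l.
Proof.
ord4 i; rewrite /rho /=.
- rewrite [LHS]mxE [X in _ * X]mxE projketE // projpsi2E.
  by ord4 k; ord4 l; rewrite /=; field.
- rewrite [LHS]mxE [X in _ * X]mxE projketE // projpsi3E.
  by ord4 k; ord4 l; rewrite /=; field.
- rewrite projE !chipE rmorphM /= fmorphV /= rmorph_nat.
  by ord4 k; ord4 l; rewrite /= ?ca_conj ?cb_conj ?rmorph0 -?caa -?cbb -?cab; field.
- rewrite projE !chimE rmorphM /= fmorphV /= rmorph_nat.
  by ord4 k; ord4 l; rewrite /= ?rmorphN /= ?ca_conj ?cb_conj ?rmorph0 -?caa -?cbb -?cab; field.
Qed.

Definition wt (k l : nat) : algC :=
  match k, l with 0, 0 | 1, 2 | 2, 1 => 1 | 3, 3 => -1 | _, _ => 0 end.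
Definition wpt (k l : nat) : algC :=
  match k, l with 0, 0 | 0, 3 | 3, 0 => s2^-1 | 3, 3 => - s2^-1
  | 1, 1 | 2, 2 => 1 | _, _ => 0 end.
Definition Wm : 'M[algC]_4 := \matrix_(k, l) wt k l.
Definition Wp : 'M[algC]_4 := \matrix_(k, l) wpt k l.

Lemma r2 : s2^-1 * s2^-1 = 2^-1. Proof. by rewrite -invfM s2s2. Qed.
Lemma s2inv_conj : (s2^-1)^* = s2^-1. Proof. by rewrite fmorphV /= s2_conj. Qed.

Lemma Wm_herm : Wm^t* = Wm.
Proof.
apply/matrixP => k l; rewrite !mxE.
by ord4 k; ord4 l; rewrite /= ?rmorph0 ?rmorph1 ?rmorphN1.
Qed.

Lemma Wp_herm : Wp^t* = Wp.
Proof.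
apply/matrixP => k l; rewrite !mxE.
by ord4 k; ord4 l; rewrite /= ?rmorph0 ?rmorph1 ?rmorphN /= ?s2inv_conj.
Qed.

Lemma Wm_unit : Wm \is unitarymx.
Proof.
apply/unitarymxP; rewrite Wm_herm; apply/matrixP => k l.
rewrite !mxE !big_ord_recr big_ord0 /= !mxE.
by ord4 k; ord4 l; rewrite /=; ring.
Qed.

Lemma Wp_unit : Wp \is unitarymx.
Proof.
apply/unitarymxP; rewrite Wp_herm; apply/matrixP => k l.
rewrite !mxE !big_ord_recr big_ord0 /= !mxE.
by ord4 k; ord4 l; rewrite /= ?mulrN ?mulNr ?opprK ?r2; field; rewrite ?s2_neq0.
Qed.

Lemma one_herm : (1%:M : 'M[algC]_4)^t* = 1%:M.
Proof. by apply/matrixP => k l; rewrite !mxE rmorph_nat eq_sym. Qed.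

Lemma one_unit : (1%:M : 'M[algC]_4) \is unitarymx.
Proof. by apply/unitarymxP; rewrite one_herm mulmx1. Qed.

Lemma tr_rho (i : 'I_4) : \tr (rho i) = 1.
Proof.
rewrite /mxtrace !big_ord_recr big_ord0 /= !rhoE.
by ord4 i; rewrite /=; field.
Qed.

Lemma trW (i : 'I_4) :
  sg i 0 * sg i 3 * \tr (Wm *m rho i) = sg i 0 * sg i 3 * (sg i 0 * sg i 3).
Proof.
rewrite /mxtrace !big_ord_recr big_ord0 /= !mxE !big_ord_recr !big_ord0 /= !rhoE !mxE.
by ord4 i; rewrite /=; field.
Qed.

Lemma trWp (i : 'I_4) :
  sg i 1 * sg i 2 * \tr (Wp *m rho i) = sg i 1 * sg i 2 * (sg i 1 * sg i 2).
Proof.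
rewrite /mxtrace !big_ord_recr big_ord0 /= !mxE !big_ord_recr !big_ord0 /= !rhoE !mxE.
by ord4 i; rewrite /=; field; rewrite ?s2_neq0.
Qed.

Definition Uf (x : 'I_4) : 'M[algC]_4 :=
  match nat_of_ord x with 0 => Wm | 1 => Wp | _ => 1%:M end.

Lemma Uf_unit x : Uf x \is unitarymx.
Proof. by ord4 x; rewrite /= ?Wm_unit ?Wp_unit ?one_unit. Qed.

Lemma trUU (U R : 'M[algC]_4) : U \is unitarymx -> \tr (U *m R *m U^t*) = \tr R.
Proof.
move=> /unitarymxP /mulmx1C h.
by rewrite mxtrace_mulC mulmxA h mul1mx.
Qed.

Lemma Tval (i x x' : 'I_4) :
  sg i x * sg i x' * \tr (Uf x *m rho i *m (Uf x')^t*) =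
  sg i x * sg i x' * (sg i x * sg i x').
Proof.
have tUf y : \tr (Uf y *m rho i *m (Uf y)^t*) = 1 by rewrite trUU ?Uf_unit ?tr_rho.
ord4 x; ord4 x'; rewrite ?tUf; clear tUf; rewrite /Uf /=;
  rewrite ?one_herm ?Wm_herm ?Wp_herm ?mulmx1 ?mul1mx.
all: try (by ord4 i; rewrite /=; ring).
- exact: trW.
- exact: trWp.
- by rewrite mxtrace_mulC (mulrC (sg i 2)); exact: trWp.
- by rewrite mxtrace_mulC (mulrC (sg i 3)); exact: trW.
Qed.

Lemma rhsE p k (x x' : 'I_4) :
  ((1 - k) *: (p *: proj psi0 + (1 - p) *: proj psi2) + k *: ((4%:R)^-1 *: 1%:M)) x x'
  = (1 - k) * (p * proj psi0 x x' + (1 - p) * proj psi2 x x') + k * (4^-1 * (x == x')%:R).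
Proof. by move: (proj psi0) (proj psi2) => A B; rewrite !mxE. Qed.

Lemma trUU1 (x x' : 'I_4) :
  (x == x')%:R * \tr (Uf x *m (Uf x')^t*) = (x == x')%:R * 4.
Proof.
case: (eqVneq x x') => [<-|ne]; last by rewrite !mul0r.
by rewrite (unitarymxP (Uf_unit x)) mxtrace1.
Qed.

Theorem mainTheorem1 (p kappa : algC) :
  0 <= p <= 1 -> 0 <= kappa <= 1 ->
  exists Uf : 'I_4 -> 'M[algC]_4,
    (forall x, Uf x \is unitarymx) /\
    ptrace2 (controlled Uf *m rhoH p kappa *m (controlled Uf)^t*)
    = (1 - kappa) *: (p *: proj psi0 + (1 - p) *: proj psi2)
      + kappa *: ((4%:R)^-1 *: 1%:M).
Proof.
move=> _ _; exists Uf; split; first exact: Uf_unit.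
apply/matrixP => x x'.
rewrite entryE rhsE -mulrA trUU1.
have -> : \sum_i q p i * proj (psi i) x x' * \tr (Uf x *m rho i *m (Uf x')^t*)
   = \sum_i q p i * (2^-1 * (sg i x * sg i x' * (sg i x * sg i x'))).
  by apply: eq_bigr => i _; rewrite projpsiE -(mulrA (q p i)) -(mulrA 2^-1) Tval.
rewrite projpsi0E projpsi2E !big_ord_recr big_ord0 /=.
by rewrite /q /=; ord4 x; ord4 x'; rewrite /=; field.
Qed.
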